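(* Let $N\ge2$, $d\ge1$, let $E\subset\mathbb{Z}_N^d$, and let $\Sigma\subset\mathbb{Z}_N^d$ be a nonempty Salem set at level $\Lambda_{\text{Salem}}>0$. Then for every nonzero $f:\mathbb{Z}_N^d\to\mathbb{C}$ supported in $E$ whose Fourier transform $\hat f$ is supported in $\Sigma$, $$|E|\cdot|\Sigma|^{3/4}\ \ge\ N^d\sqrt{\frac{1-\mathrm{dens}(\Sigma)}{\Lambda_{\text{Salem}}}},$$ where $\mathrm{dens}(\Sigma)=N^{-d}|\Sigma|$.
   Context: $\chi(t)=e^{2\pi i t/N}$, $\hat f(m)=N^{-d}\sum_{x\in\mathbb{Z}_N^d}\chi(-x\cdot m)f(x)$. For a set $S$ we identify $S$ with its indicator function, so $\hat S(z)=N^{-d}\sum_{x\in S}\chi(-x\cdot z)$. A set $S\subset\mathbb{Z}_N^d$ is a Salem set at level $\Lambda_{\text{Salem}}$ if $|\hat S(z)|\le \Lambda_{\text{Salem}}N^{-d}|S|^{1/2}$ for all $z\ne 0$. *)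

(* Defs.v *)
From HB Require Import structures.
From mathcomp Require Import all_boot all_order all_algebra.
From mathcomp Require Import reals trigo exp.
From mathcomp Require Export complex.
Set Implicit Arguments. Unset Strict Implicit. Unset Printing Implicit Defensive.
Import Order.TTheory GRing.Theory Num.Theory.
Local Open Scope ring_scope.
Local Open Scope complex_scope.

(* Z_N^d as row vectors over 'Z_N (used only with 1 < N) *)
Definition ZNd (N d : nat) := 'rV['Z_N]_d.

Definition dotZ (N d : nat) (x m : ZNd N d) : 'Z_N := \sum_(i < d) x ord0 i * m ord0 i.

(* chi(t) = e^{2 pi i t / N}, t taken via its representative in [0, N) *)
Definition chi (R : realType) (N : nat) (t : 'Z_N) : complex R :=
  (cos (2 * pi * (val t)%:R / N%:R)) +i* (sin (2 * pi * (val t)%:R / N%:R)).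

Definition fourier (R : realType) (N d : nat) (f : ZNd N d -> complex R) (m : ZNd N d)
  : complex R :=
  ((N%:R ^- d : R)%:C) * \sum_(x : ZNd N d) chi R (- dotZ x m) * f x.

Definition indic (R : realType) (N d : nat) (S : {set ZNd N d}) (x : ZNd N d) : complex R :=
  if x \in S then 1 else 0.

Definition Salem (R : realType) (N d : nat) (S : {set ZNd N d}) (L : R) : Prop :=
  forall z : ZNd N d, z != 0 ->
    `| fourier (indic R S) z | <= ((L * N%:R ^- d * Num.sqrt (#|S|%:R)) : R)%:C.

Definition dens (R : realType) (N d : nat) (S : {set ZNd N d}) : R :=
  N%:R ^- d * #|S|%:R.

(* Main.v *)
Require Import Defs.
From HB Require Import structures.
From mathcomp Require Import all_boot all_order all_algebra.
From mathcomp Require Import reals trigo exp.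
From mathcomp Require Import complex.
From mathcomp Require Import ring lra.
Import Order.TTheory GRing.Theory Num.Theory.
Local Open Scope ring_scope.

Set Implicit Arguments. Unset Strict Implicit. Unset Printing Implicit Defensive.

Definition ee (R : realType) (t : R) : complex R := (cos t +i* sin t)%C.

Lemma eeD (R : realType) (x y : R) : ee (x + y) = ee x * ee y.
Proof.
rewrite /ee cosD sinD; apply/eqP; rewrite eq_complex /=; apply/andP; split; apply/eqP.
  by [].
by rewrite addrC mulrC [sin y * _]mulrC.
Qed.

Lemma ee2pi (R : realType) (x : R) (k : nat) : ee (x + pi *+ 2 * k%:R) = ee x.
Proof.
elim: k => [|k IH]; first by rewrite mulr0 addr0.
have -> : (k.+1%:R : R) = k%:R + 1 by rewrite mulrSr.
rewrite mulrDr mulr1 addrA /ee cosD2pi sinD2pi -/(ee _).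
exact: IH.
Qed.

Lemma chiE (R : realType) N (t : 'Z_N) : chi R t = ee (2 * pi * (val t)%:R / N%:R).
Proof. by []. Qed.

Lemma chiD (R : realType) N (hN : (1 < N)%N) (a b : 'Z_N) : chi R (a + b) = chi R a * chi R b.
Proof.
rewrite !chiE -eeD.
have vab : val (a + b) = ((val a + val b) %% N)%N.
  have H : forall x y : nat, ((x + y) %% (Zp_trunc N).+2 = (x + y) %% N)%N.
    by move=> x y; rewrite Zp_cast.
  exact: H.
have N0 : (N%:R : R) != 0 by rewrite pnatr_eq0 -lt0n; apply: ltnW.
rewrite vab -[in LHS](ee2pi _ ((val a + val b) %/ N)).
congr ee.
rewrite -mulrDl -mulrDr -natrD [in RHS](divn_eq (val a + val b) N) natrD natrM.
by field.
Qed.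

Lemma chi0 (R : realType) N : chi R (0 : 'Z_N) = 1.
Proof. by rewrite chiE /= mulr0 mul0r /ee cos0 sin0. Qed.

Lemma chiN (R : realType) N (hN : (1 < N)%N) (t : 'Z_N) : chi R (- t) * chi R t = 1.
Proof. by rewrite -chiD // addNr chi0. Qed.

Lemma norm_ee (R : realType) (x : R) : `|ee x| = 1.
Proof. by rewrite normc_def /= cos2Dsin2 sqrtr1. Qed.

Lemma norm_chi (R : realType) N (t : 'Z_N) : `|chi R t| = 1.
Proof. exact: norm_ee. Qed.

Lemma chi_neq1 (R : realType) N (hN : (1 < N)%N) (t : 'Z_N) : t != 0 -> chi R t != 1.
Proof.
move=> t0; rewrite chiE /ee; apply/negP => /eqP[] hc _.
set th := 2 * pi * (val t)%:R / N%:R in hc.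
have Npos : (0 : R) < N%:R by rewrite ltr0n; apply: ltnW.
have vt0 : (0 < val t)%N by rewrite lt0n; apply: contra t0 => /eqP h; apply/eqP/val_inj.
have vtN : (val t < N)%N.
  have H : forall x : nat, (x < (Zp_trunc N).+2)%N -> (x < N)%N by move=> x; rewrite Zp_cast.
  exact: H (ltn_ord t).
have e2 : th / 2 = pi * ((val t)%:R / N%:R).
  by rewrite /th; field; rewrite pnatr_eq0 -lt0n; apply: ltnW.
have h1 : 0 < th / 2 < pi.
  rewrite e2; apply/andP; split.
    rewrite !mulr_gt0 ?invr_gt0 ?ltr0n //; [exact: pi_gt0|exact: ltnW].
  by rewrite gtr_pMr ?pi_gt0 // ltr_pdivrMr // mul1r ltr_nat.
have hs : 0 < sin (th / 2) by apply: sin_gt0_pi.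
have thE : th = (th / 2) *+ 2 by rewrite -mulr_natr divfK // pnatr_eq0.
move: hc; rewrite thE cos_mulr2n => hc.
have := sin2cos2 (th / 2).
move: hs hc; set c := cos _; set s := sin _ => hs hc hsc.
nra.
Qed.

Lemma dotZDr N d (x m a : ZNd N d) : dotZ x (m + a) = dotZ x m + dotZ x a.
Proof. by rewrite /dotZ -big_split; apply: eq_bigr => i _; rewrite mxE mulrDr. Qed.

Lemma dotZBl N d (x y m : ZNd N d) : dotZ (x - y) m = dotZ x m - dotZ y m.
Proof. by rewrite /dotZ -sumrB; apply: eq_bigr => i _; rewrite !mxE mulrBl. Qed.

Lemma dotZ0l N d (m : ZNd N d) : dotZ 0 m = 0.
Proof. by rewrite /dotZ big1 // => i _; rewrite mxE mul0r. Qed.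

Lemma dotZ_delta N d (z : ZNd N d) i : dotZ z (delta_mx ord0 i) = z ord0 i.
Proof.
rewrite /dotZ (bigD1 i) //= big1 ?addr0.
  by rewrite mxE !eqxx mulr1.
by move=> j hj; rewrite mxE (negbTE hj) andbF mulr0.
Qed.

Lemma orth (R : realType) N d (hN : (1 < N)%N) (z : ZNd N d) :
  z != 0 -> \sum_(m : ZNd N d) chi R (dotZ z m) = 0.
Proof.
move=> hz.
have [i hi] : exists i, z ord0 i != 0.
  apply/existsP; apply: contraNT hz => /existsPn H; apply/eqP/rowP => i.
  by rewrite mxE; apply/eqP/negPn/H.
set a : ZNd N d := delta_mx ord0 i.
set S := \sum_m _.
have hS : S = chi R (z ord0 i) * S.
  rewrite {1}/S (reindex_inj (addIr a)) /= /S mulr_sumr; apply: eq_bigr => m _.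
  by rewrite dotZDr chiD // dotZ_delta mulrC.
have : (1 - chi R (z ord0 i)) * S = 0 by rewrite mulrBl mul1r -hS subrr.
move/eqP; rewrite mulf_eq0 subr_eq0 eq_sym (negbTE (chi_neq1 R hN hi)) /=.
by move/eqP.
Qed.

Lemma expand (R : realType) N d (hN : (1 < N)%N) (f g : ZNd N d -> complex R) (x : ZNd N d) :
  \sum_m chi R (dotZ x m) * g m * fourier f m
  = \sum_y f y * (((N%:R ^- d : R)%:C)%C * \sum_m chi R (- dotZ (y - x) m) * g m).
Proof.
rewrite /fourier.
under eq_bigr => m _ do rewrite !mulr_sumr.
rewrite exchange_big; apply: eq_bigr => y _.
rewrite !mulr_sumr; apply: eq_bigr => m _.
rewrite dotZBl opprB chiD //.
ring.
Qed.

Lemma cardZ N d (hN : (1 < N)%N) : #|{: ZNd N d}| = (N ^ d)%N.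
Proof.
rewrite /ZNd card_mx mul1n card_ord.
have H : forall k, ((Zp_trunc N).+2 ^ k = N ^ k)%N by move=> k; rewrite Zp_cast.
exact: H.
Qed.

Lemma cN (R : realType) N d (hN : (1 < N)%N) :
  ((N%:R ^- d : R)%:C)%C * ((N ^ d)%:R : complex R) = 1.
Proof.
have N0 : (N%:R : R) != 0 by rewrite pnatr_eq0 -lt0n; apply: ltnW.
rewrite -(rmorph_nat (real_complex R)) -rmorphM natrX mulVf ?expf_neq0 //.
Qed.

Lemma dotZN N d (z m : ZNd N d) : - dotZ z m = dotZ (- z) m.
Proof. by rewrite -sub0r -(dotZ0l m) -dotZBl sub0r. Qed.

Lemma chi_sum0 (R : realType) N d (hN : (1 < N)%N) (y x : ZNd N d) :
  \sum_(m : ZNd N d) chi R (- dotZ (y - x) m) =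
  if y == x then (N ^ d)%:R else 0.
Proof.
case: eqP => [->|/eqP hyx].
  under eq_bigr do rewrite subrr dotZ0l oppr0 chi0.
  by rewrite sumr_const cardZ.
under eq_bigr do rewrite dotZN.
by apply: orth => //; rewrite oppr_eq0 subr_eq0.
Qed.

Lemma inversion (R : realType) N d (hN : (1 < N)%N) (f : ZNd N d -> complex R) x :
  f x = \sum_m chi R (dotZ x m) * fourier f m.
Proof.
have := expand hN f (fun _ => 1) x.
under eq_bigr do rewrite mulr1.
move=> ->.
under eq_bigr do under eq_bigr do rewrite mulr1.
under eq_bigr do rewrite chi_sum0 //.
rewrite (bigD1 x) //= big1 ?addr0.
  by rewrite eqxx /= cN ?mulr1.
by move=> y /negbTE ->; rewrite mulr0 mulr0.
Qed.

Lemma sum_restrict (V : numDomainType) (T : finType) (P : pred T) (G : T -> V) :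
  (forall x, ~~ P x -> G x = 0) -> \sum_x G x = \sum_(x | P x) G x.
Proof. by move=> H; rewrite [RHS]big_mkcond; apply: eq_bigr => x _; case: ifP => // /negbT /H. Qed.

Lemma c_ge0 (R : realType) N d : (0 : complex R) <= ((N%:R ^- d : R)%:C)%C.
Proof. by rewrite ler0c invr_ge0 exprn_ge0 // ler0n. Qed.

Lemma norm_fourier (R : realType) N d (hN : (1 < N)%N) (f : ZNd N d -> complex R) m :
  `|fourier f m| <= ((N%:R ^- d : R)%:C)%C * \sum_x `|f x|.
Proof.
rewrite /fourier normrM (ger0_norm (c_ge0 _ _ _)) ler_wpM2l ?c_ge0 //.
apply: le_trans (ler_norm_sum _ _ _) _.
by apply: ler_sum => x _; rewrite normrM norm_chi mul1r.
Qed.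

Lemma partA (R : realType) N d (hN : (1 < N)%N) (E Sigma : {set ZNd N d})
  (f : ZNd N d -> complex R) (hf0 : exists x, f x != 0)
  (hfE : forall x, x \notin E -> f x = 0)
  (hfS : forall m, m \notin Sigma -> fourier f m = 0) :
  (1 : R) <= N%:R ^- d * #|Sigma|%:R * #|E|%:R.
Proof.
set c := ((N%:R ^- d : R)%:C)%C.
set F := \sum_x `|f x|.
have Fpos : 0 < F.
  case: hf0 => x0 hx0; rewrite /F (bigD1 x0) //=.
  by apply: ltr_wpDr; [apply: sumr_ge0 => *; exact: normr_ge0 | rewrite normr_gt0].
have A2 : forall x, `|f x| <= (c * F) *+ #|Sigma|.
  move=> x; rewrite (inversion hN f x).
  apply: le_trans (ler_norm_sum _ _ _) _.
  under eq_bigr do rewrite normrM norm_chi mul1r.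
  rewrite (sum_restrict (P := mem Sigma)); last by move=> m /hfS ->; rewrite normr0.
  rewrite -sumr_const; apply: ler_sum => m _; exact: norm_fourier.
have A3 : F <= (c * F) *+ #|Sigma| *+ #|E|.
  rewrite {1}/F (sum_restrict (P := mem E)); last by move=> x /hfE ->; rewrite normr0.
  by rewrite -sumr_const; apply: ler_sum => x _; exact: A2.
move: A3; rewrite -mulrnA.
have -> : c * F *+ (#|Sigma| * #|E|) = F * (c * (#|Sigma| * #|E|)%:R).
  by rewrite -mulr_natr mulrAC mulrC.
rewrite -{1}[F]mulr1 ler_pM2l // => h.
rewrite -lecR; apply: le_trans h _.
by rewrite /c !rmorphM /= !rmorph_nat mulrA.
Qed.

Lemma dotZC N d (x m : ZNd N d) : dotZ x m = dotZ m x.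
Proof. by rewrite /dotZ; apply: eq_bigr => i _; rewrite mulrC. Qed.

Lemma fourier_indic0 (R : realType) N d (S : {set ZNd N d}) :
  fourier (indic R S) 0 = (dens R S)%:C%C.
Proof.
rewrite /fourier /dens rmorphM /= rmorph_nat; congr (_ * _).
under eq_bigr do rewrite dotZC dotZ0l oppr0 chi0 mul1r.
by rewrite /indic -big_mkcond sumr_const.
Qed.

Lemma dens_le1 (R : realType) N d (hN : (1 < N)%N) (S : {set ZNd N d}) : dens R S <= 1.
Proof.
have N0 : (0 : R) < N%:R by rewrite ltr0n; apply: ltnW.
rewrite /dens ler_pdivrMl ?exprn_gt0 // mulr1 -natrX ler_nat -(cardZ d hN).
exact: max_card.
Qed.

Lemma partB (R : realType) N d (hN : (1 < N)%N) (E Sigma : {set ZNd N d}) (L : R) (hL : 0 < L)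
  (hSalem : Salem Sigma L)
  (f : ZNd N d -> complex R) (hf0 : exists x, f x != 0)
  (hfE : forall x, x \notin E -> f x = 0)
  (hfS : forall m, m \notin Sigma -> fourier f m = 0) :
  1 - dens R Sigma <= #|E|%:R * (L * N%:R ^- d * Num.sqrt (#|Sigma|%:R)).
Proof.
set B := ((L * N%:R ^- d * Num.sqrt (#|Sigma|%:R) : R)%:C)%C.
set Sh := fourier (indic R Sigma).
have hB : 0 <= B.
  rewrite /B ler0c mulr_ge0 ?sqrtr_ge0 // mulr_ge0 ?invr_ge0 ?exprn_ge0 ?ler0n //.
  exact: ltW.
set F := \sum_x `|f x|.
have Fpos : 0 < F.
  case: hf0 => x0 hx0; rewrite /F (bigD1 x0) //=.
  by apply: ltr_wpDr; [apply: sumr_ge0 => *; exact: normr_ge0 | rewrite normr_gt0].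
have B1 : forall x, f x = \sum_y f y * Sh (y - x).
  move=> x; rewrite {1}(inversion hN f x).
  have := expand hN f (indic R Sigma) x.
  have -> : \sum_m chi R (dotZ x m) * indic R Sigma m * fourier f m =
            \sum_m chi R (dotZ x m) * fourier f m.
    apply: eq_bigr => m _; rewrite /indic; case: ifP => hm; first by rewrite mulr1.
    by rewrite hfS ?hm // !mulr0.
  move=> ->; apply: eq_bigr => y _; congr (_ * _).
  by rewrite /Sh /fourier; congr (_ * _); apply: eq_bigr => m _; rewrite dotZC.
have dge0 : (0 : R) <= 1 - dens R Sigma by rewrite subr_ge0 dens_le1.
have B3 : forall x, `|f x| * (1 - dens R Sigma)%:C%C <= F * B.
  move=> x.
  have hx : f x * (1 - dens R Sigma)%:C%C = \sum_(y | y != x) f y * Sh (y - x).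
    move: (B1 x); rewrite (bigD1 x) //= subrr /Sh fourier_indic0 rmorphB /= => ex.
    by rewrite mulrBr mulr1 {1}ex addrAC subrr add0r.
  rewrite -(ger0_norm (x := (1 - dens R Sigma)%:C%C)) ?ler0c // -normrM hx.
  apply: le_trans (ler_norm_sum _ _ _) _.
  apply: (@le_trans _ _ (\sum_(y | y != x) `|f y| * B)).
    apply: ler_sum => y hy; rewrite normrM ler_wpM2l //; apply: hSalem.
    by rewrite subr_eq0.
  rewrite /F mulr_suml [X in _ <= X](bigD1 x) //=.
  by apply: ler_wpDl; first by rewrite mulr_ge0.
have B4 : F * (1 - dens R Sigma)%:C%C <= F * (B * #|E|%:R).
  rewrite {1}/F mulr_suml (sum_restrict (P := mem E)); last first.
    by move=> x /hfE ->; rewrite normr0 mul0r.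
  rewrite mulrA mulr_natr -sumr_const; apply: ler_sum => x _; exact: B3.
move: B4; rewrite ler_pM2l // -(rmorph_nat (real_complex R)) -rmorphM lecR.
by rewrite mulrC.
Qed.

Unset Implicit Arguments.
Theorem theorem3 (R : realType) (N d : nat) (hN : (1 < N)%N) (hd : (0 < d)%N)
  (E Sigma : {set ZNd N d}) (hSigma : Sigma != set0) (L : R) (hL : 0 < L)
  (hSalem : Salem Sigma L)
  (f : ZNd N d -> complex R) (hf0 : exists x, f x != 0)
  (hfE : forall x, x \notin E -> f x = 0)
  (hfS : forall m, m \notin Sigma -> fourier f m = 0) :
  N%:R ^+ d * Num.sqrt ((1 - dens R Sigma) / L)
    <= #|E|%:R * powR (#|Sigma|%:R : R) (3 / 4).
Proof.
have hA := partA hN hf0 hfE hfS.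
have hB := partB hN hL hSalem hf0 hfE hfS.
have dge0 : (0 : R) <= 1 - dens R Sigma by rewrite subr_ge0 dens_le1.
move: hA hB dge0; rewrite /dens.
set M := (N%:R ^+ d : R); set iM := N%:R ^- d; set s := (#|Sigma|%:R : R);
  set e := (#|E|%:R : R) => hA hB dge0.
have N0 : (N%:R : R) != 0 by rewrite pnatr_eq0 -lt0n; apply: ltnW.
have MiM : M * iM = 1 by rewrite /M /iM mulfV // expf_neq0.
have Mge0 : 0 <= M by rewrite /M exprn_ge0 // ler0n.
have ege0 : 0 <= e by rewrite ler0n.
have sge0 : 0 <= s by rewrite ler0n.
have s0 : s != 0 by rewrite pnatr_eq0 cards_eq0.
set r := Num.sqrt s.
have rge0 : 0 <= r by rewrite sqrtr_ge0.
set q := (1 - iM * s) / L.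
have qge0 : 0 <= q by rewrite divr_ge0 // ltW.
have P2 : powR s (3 / 4) ^+ 2 = s * r.
  rewrite -powR_mulrn ?powR_ge0 // -powRrM.
  have -> : 3 / 4 * 2%:R = 1 + 2^-1 :> R by field.
  rewrite powRD ?s0 ?implybT // powRr1 // powR12_sqrt //.
have h1 : q <= e * iM * r.
  rewrite /q ler_pdivrMr //; apply: le_trans hB _.
  by rewrite le_eqVlt; apply/orP; left; apply/eqP; change (Num.ExtraDef.sqrtr s) with r; ring.
have h2 : M <= s * e.
  by rewrite -[M]mulr1; apply: le_trans (ler_wpM2l Mge0 hA) _; rewrite !mulrA MiM mul1r.
rewrite -ler_sqr ?nnegrE ?mulr_ge0 ?sqrtr_ge0 ?powR_ge0 //.
rewrite !exprMn sqr_sqrtr // P2.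
apply: (@le_trans _ _ (M ^+ 2 * (e * iM * r))); first by rewrite ler_wpM2l ?exprn_ge0.
have -> : M ^+ 2 * (e * iM * r) = M * (e * r).
  by rewrite expr2 -!mulrA; congr (_ * _); rewrite mulrCA; congr (_ * _); rewrite mulrA MiM mul1r.
apply: le_trans (ler_wpM2r (mulr_ge0 ege0 rge0) h2) _.
by rewrite le_eqVlt; apply/orP; left; apply/eqP; ring.
Qed.
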